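(* Let $\mathcal{B}$ be a Boolean control network. If $\mathcal{B}$ satisfies Type-III observability, then $\mathcal{B}$ is online observable.
   Context: $\mathbb{B}=\{0,1\}$. A BCN has inputs $\mathcal{I}=\mathbb{B}^\ell$, states $\mathcal{S}=\mathbb{B}^m$, outputs $\mathcal{O}=\mathbb{B}^n$ and updating rules $\sigma:\mathcal{I}\times\mathcal{S}\to\mathcal{S}$, $\rho:\mathcal{S}\to\mathcal{O}$, with $\mathsf{s}(t+1)=\sigma(\mathsf{i}(t),\mathsf{s}(t))$, $\mathsf{o}(t)=\rho(\mathsf{s}(t))$. For a state $\mathsf{s}$ and input sequence $\mathsf{I}=\mathsf{i}(0)\ldots\mathsf{i}(t)$, $H^{[0,t]}(\mathsf{s},\mathsf{I})=\mathsf{o}(0)\ldots\mathsf{o}(t+1)$ is the output sequence of the run with $\mathsf{s}(0)=\mathsf{s}$. Type-III observability: there exists an input sequence $\mathsf{I}=\mathsf{i}(0)\ldots\mathsf{i}(t)$ such that for any two distinct states $\mathsf{s},\mathsf{s}'$, $H^{[0,t]}(\mathsf{s},\mathsf{I})\ne H^{[0,t]}(\mathsf{s}',\mathsf{I})$. Online observability: with $\varepsilon$ denoting empty input/output, let $\xi(\mathsf{i},\mathsf{s})=\sigma(\mathsf{i},\mathsf{s})$ for $\mathsf{i}\ne\varepsilon$, $\xi(\varepsilon,\mathsf{s})=\mathsf{s}$; for $\mathsf{S}\subseteq\mathcal{S}$, $\zeta(\mathsf{S},\mathsf{i},\mathsf{o})=\{\xi(\mathsf{i},\mathsf{s}):\mathsf{s}\in\mathsf{S},\rho(\xi(\mathsf{i},\mathsf{s}))=\mathsf{o}\}$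 if $\mathsf{o}\ne\varepsilon$ and $\zeta(\mathsf{S},\mathsf{i},\varepsilon)=\{\xi(\mathsf{i},\mathsf{s}):\mathsf{s}\in\mathsf{S}\}$. For nonempty $\mathsf{S}$: $P_0(\mathsf{S})$ iff $|\mathsf{S}|=1$; $P_{n+1}(\mathsf{S})$ iff $|\mathsf{S}|=1$ or there is $\mathsf{i}\in\mathcal{I}$ with $|\zeta(\mathsf{S},\mathsf{i},\varepsilon)|=|\mathsf{S}|$ such that every nonempty $\zeta(\mathsf{S},\mathsf{i},\mathsf{o})$, $\mathsf{o}\in\mathcal{O}$, satisfies $P_n$. $\Gamma(\mathsf{S})$ is the least $n$ with $P_n(\mathsf{S})$, or $\infty$ if none. The BCN is online observable if $\Gamma(\zeta(\mathcal{S},\varepsilon,\mathsf{o}))\ne\infty$ for every $\mathsf{o}\in\mathcal{O}$ with $\zeta(\mathcal{S},\varepsilon,\mathsf{o})\ne\emptyset$. *)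

(* Defs.v *)
From mathcomp Require Import all_boot.
Set Implicit Arguments. Unset Strict Implicit. Unset Printing Implicit Defensive.

Notation Bvec k := (k.-tuple bool).

Section BCN.
Variables (l m n : nat).
Variable sigma : Bvec l -> Bvec m -> Bvec m.
Variable rho : Bvec m -> Bvec n.

(* H^{[0,t]}(s, I) = o(0) ... o(t+1) for I = i(0) ... i(t). *)
Fixpoint outputs (s : Bvec m) (I : seq (Bvec l)) : seq (Bvec n) :=
  match I with
  | [::] => [:: rho s]
  | i :: I' => rho s :: outputs (sigma i s) I'
  end.

Definition type3_observable : Prop :=
  exists I : seq (Bvec l), 0 < size I /\
    forall s s' : Bvec m, s != s' -> outputs s I != outputs s' I.

(* None plays the role of the empty input / output epsilon. *)
Definition xi (i : option (Bvec l)) (s : Bvec m) : Bvec m :=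
  match i with Some i => sigma i s | None => s end.

Definition zeta (S : {set Bvec m}) (i : option (Bvec l)) (o : option (Bvec n))
  : {set Bvec m} :=
  match o with
  | Some o => [set xi i s | s in S & rho (xi i s) == o]
  | None => [set xi i s | s in S]
  end.

Fixpoint Pn (k : nat) (S : {set Bvec m}) : bool :=
  match k with
  | 0 => #|S| == 1
  | k.+1 => (#|S| == 1) ||
      [exists i : Bvec l, (#|zeta S (Some i) None| == #|S|) &&
         [forall o : Bvec n, (zeta S (Some i) (Some o) != set0) ==>
                              Pn k (zeta S (Some i) (Some o))]]
  end.

(* Gamma(S) <> infinity  iff  P_k(S) for some k. *)
Definition Gamma_finite (S : {set Bvec m}) : Prop := exists k, Pn k S.

Definition online_observable : Prop :=
  forall o : Bvec n, zeta setT None (Some o) != set0 ->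
    Gamma_finite (zeta setT None (Some o)).

End BCN.

(* Main.v *)
Require Import Defs.
From mathcomp Require Import all_boot.
Set Implicit Arguments. Unset Strict Implicit. Unset Printing Implicit Defensive.

Section Key.
Variables (l m n : nat).
Variable sigma : Bvec l -> Bvec m -> Bvec m.
Variable rho : Bvec m -> Bvec n.

Lemma key (J : seq (Bvec l)) : forall S : {set Bvec m}, S != set0 ->
  (forall s s', s \in S -> s' \in S -> rho s = rho s') ->
  (forall s s', s \in S -> s' \in S -> s != s' ->
     outputs sigma rho s J != outputs sigma rho s' J) ->
  Pn sigma rho (size J) S.
Proof.
elim: J => [|i J IH] S /set0Pn [x Hx] Hrho Hd.
  rewrite /=; apply/cards1P; exists x; apply/setP => s; rewrite inE.
  apply/idP/eqP => [Hs|->//]; apply/eqP; apply: contraT => ne.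
  by have := Hd s x Hs Hx ne; rewrite /= (Hrho s x) // eqxx.
have inj : {in S &, injective (sigma i)}.
  move=> s s' Hs Hs' E; apply/eqP; apply: contraT => ne.
  by have := Hd s s' Hs Hs' ne; rewrite /= E (Hrho s s') // eqxx.
rewrite /=; apply/orP; right; apply/existsP; exists i; apply/andP; split.
  by rewrite /= card_in_imset.
apply/forallP => o; apply/implyP => ne0; apply: IH => //.
  move=> y y' /imsetP [s Hs ->] /imsetP [s' Hs' ->].
  move: Hs Hs'; rewrite !inE /= => /andP [_ /eqP ->] /andP [_ /eqP ->] //.
move=> y y' /imsetP [s Hs ->] /imsetP [s' Hs' ->] ne.
move: Hs Hs'; rewrite !inE /= => /andP [Hs _] /andP [Hs' _].
have nss : s != s' by apply: contraNneq ne => ->.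
have := Hd s s' Hs Hs' nss; rewrite /= (Hrho s s') //.
by apply: contra => /eqP ->.
Qed.
End Key.

Theorem lemma2 (l m n : nat)
  (sigma : (l.-tuple bool) -> (m.-tuple bool) -> (m.-tuple bool))
  (rho : (m.-tuple bool) -> (n.-tuple bool)) :
  type3_observable sigma rho -> online_observable sigma rho.
Proof.
move=> [I [_ HI]] o ne0; exists (size I); apply: key => //.
  move=> y y' /imsetP [s Hs ->] /imsetP [s' Hs' ->].
  move: Hs Hs'; rewrite !inE /= => /eqP -> /eqP -> //.
move=> y y' /imsetP [s Hs ->] /imsetP [s' Hs' ->] ne; exact: HI.
Qed.
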